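(* Let $N=[1,n]=\{1,\dots,n\}$ ($n\ge0$). Then \[ |G_2(N)/{\cong}|=\sum_{[M]\in\mathcal{P}(N)/{\cong}}|\overline{L}_2(|M|)/\mathcal{S}_2| + \sum_{[M]\in\mathcal{P}(N)/{\cong},\ M\notin\mathrm{Sym}}\big(|\overline{t}^{\langle 1\rangle}_{|M|}|+|\overline{t}^{\langle c\rangle}_{|M|}|\big). \]
   Context: Binary CAs: for finite $M=\{j_1<\dots<j_m\}\subset\mathbb{Z}$ and $f:\{0,1\}^m\to\{0,1\}$, $\Phi^M_f(x)_i=f(x_{i+j_1}\dots x_{i+j_m})$ on $\{0,1\}^{\mathbb{Z}}$; $G_2(N)=\{\Phi^N_f\mid f:\{0,1\}^{|N|}\to\{0,1\}\}$. $\overline{L}_2(m)$ is the set of irreducible $f:\{0,1\}^m\to\{0,1\}$ (depending on every argument). On rules: $c$ swaps $0,1$ letterwise, $r$ reverses words, $\hat cf(w)=c f(cw)$, $\hat rf(w)=f(rw)$; $\mathcal{S}_2=\{1,r,c,rc\}$ acts on $\overline{L}_2(m)$, $\mathrm{stab}(f)=\{\alpha\mid\hat\alpha f=f\}$, and $\overline{t}^U_m=\{[f]\in\overline{L}_2(m)/\mathcal{S}_2\mid\mathrm{stab}(f)=U\}$ for $U\le\mathcal{S}_2$. On global maps: $\sigma\Phi=\sigma\circ\Phi$ with $(\sigma x)_i=x_{i+1}$, $\hat c\Phi(x)=c\Phi(cx)$ (cellwise), $\hat r\Phi(x)=r\Phi(rx)$ with $(rx)_i=x_{-i}$; $\mathcal{T}_2$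 is the group generated by these, and $\Phi\cong\Psi$ iff $\Psi=\tau\Phi$ for some $\tau\in\mathcal{T}_2$; $G_2(N)/{\cong}$ is the set of classes of this relation restricted to $G_2(N)$. For sets of integers, $M\cong M'$ iff $M'=j+M$ or $M'=j-M$ for some $j\in\mathbb{Z}$ (where $j\pm M=\{j\pm i\mid i\in M\}$); $\mathcal{P}(N)/{\cong}$ is the set of classes of this relation restricted to subsets of $N$. $\mathrm{Sym}$ is the set of reflection-symmetrical sets, i.e. $M$ with $M=j-M$ for some $j\in\mathbb{Z}$. *)

(* Defs.v *)
From HB Require Import structures.
From mathcomp Require Import all_boot all_order all_algebra.
From mathcomp Require Import boolp.
Set Implicit Arguments. Unset Strict Implicit. Unset Printing Implicit Defensive.
Import Order.TTheory GRing.Theory Num.Theory.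
Local Open Scope ring_scope.

Definition config := int -> bool.
Definition gmap := config -> config.

Definition word (m : nat) := {ffun 'I_m -> bool}.
Definition rule (m : nat) := {ffun word m -> bool}.

Definition PhiN (n : nat) (f : rule n) : gmap :=
  fun x i => f [ffun j : 'I_n => x (i + (j.+1)%:Z)].

(* generators sigma, sigma^{-1}, c^, r^ (the latter two are involutions) *)
Inductive gen := Gsigma | Gsigma_inv | Gc | Gr.

Definition act_gen (g : gen) (Phi : gmap) : gmap :=
  match g with
  | Gsigma => fun x i => Phi x (i + 1)
  | Gsigma_inv => fun x i => Phi x (i - 1)
  | Gc => fun x i => ~~ Phi (fun k => ~~ x k) i
  | Gr => fun x i => Phi (fun k => x (- k)) (- i)
  end.

Definition act_T2 (tau : seq gen) (Phi : gmap) : gmap := foldr act_gen Phi tau.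

Definition gcong (Phi Psi : gmap) : Prop := exists tau : seq gen, Psi = act_T2 tau Phi.

(* |G_2(N)/~=| for N = [1,n]: the classes of G_2(N), each identified with the
   set of rules f whose global map Phi^N_f lies in it *)
Definition num_G2_classes (n : nat) : nat :=
  #|[set [set g : rule n | `[< gcong (PhiN f) (PhiN g) >]] | f : rule n]|.

(* M : {set 'I_n} represents the subset {k+1 | k in M} of Z *)
Definition toZ (n : nat) (M : {set 'I_n}) (z : int) : bool :=
  [exists k in M, z == (k.+1)%:Z].

Definition scong (n : nat) (M M' : {set 'I_n}) : Prop :=
  exists j : int, (forall z, toZ M' z = toZ M (z - j))
               \/ (forall z, toZ M' z = toZ M (j - z)).

Definition Sym (n : nat) (M : {set 'I_n}) : Prop :=
  exists j : int, forall z, toZ M z = toZ M (j - z).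

Definition Pclasses (n : nat) : {set {set {set 'I_n}}} :=
  [set [set M' | `[< scong M M' >]] | M : {set 'I_n}].

Definition rep (n : nat) (C : {set {set 'I_n}}) : {set 'I_n} :=
  odflt set0 [pick M in C].

Definition flip (m : nat) (w : word m) (i : 'I_m) : word m :=
  [ffun j => if j == i then ~~ w j else w j].

Definition irreducible (m : nat) (f : rule m) : bool :=
  [forall i : 'I_m, exists w : word m, f w != f (flip w i)].

Definition cw (m : nat) (w : word m) : word m := [ffun j => ~~ w j].
Definition rw (m : nat) (w : word m) : word m := [ffun j => w (rev_ord j)].

Definition chat (m : nat) (f : rule m) : rule m := [ffun w => ~~ f (cw w)].
Definition rhat (m : nat) (f : rule m) : rule m := [ffun w => f (rw w)].

(* S_2 encoded as bool * bool: (br, bc) stands for r^br c^bc;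
   (false,false) = 1, (true,false) = r, (false,true) = c, (true,true) = rc *)
Definition S2 := (bool * bool)%type.
Definition actS2 (m : nat) (a : S2) (f : rule m) : rule m :=
  let f1 := (if a.2 then chat f else f) in if a.1 then rhat f1 else f1.

Definition orbitS2 (m : nat) (f : rule m) : {set rule m} :=
  [set g | [exists a : S2, g == actS2 a f]].

Definition stab (m : nat) (f : rule m) : {set S2} := [set a | actS2 a f == f].

Definition num_Lbar_classes (m : nat) : nat :=
  #|[set orbitS2 f | f in [pred f : rule m | irreducible f]]|.

Definition tbar (U : {set S2}) (m : nat) : nat :=
  #|[set orbitS2 f | f in [pred f : rule m | irreducible f && (stab f == U)]]|.

Definition U1 : {set S2} := [set (false, false)].
Definition Uc : {set S2} := [set (false, false); (false, true)].

(* Main.v *)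
Require Import Defs.
From HB Require Import structures.
From mathcomp Require Import all_boot all_order all_algebra.
From mathcomp Require Import boolp.
From mathcomp Require Import zify ring.
Set Implicit Arguments. Unset Strict Implicit. Unset Printing Implicit Defensive.
Import Order.TTheory GRing.Theory Num.Theory.
Local Open Scope ring_scope.

Definition Nf (k : int) (a b : bool) (Phi : gmap) : gmap :=
  fun x i => a (+) Phi (fun z => a (+) x (if b then - z else z))
                      (if b then - (i + k) else i + k).

Definition step (g : gen) (p : int * bool * bool) : int * bool * bool :=
  let: (k, a, b) := p in
  match g with
  | Gsigma => (k + 1, a, b)
  | Gsigma_inv => (k - 1, a, b)
  | Gc => (k, ~~ a, b)
  | Gr => (- k, a, ~~ b)
  end.

Lemma act_gen_Nf g k a b Phi :
  act_gen g (Nf k a b Phi) = Nf (step g (k, a, b)).1.1 (step g (k, a, b)).1.2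
                               (step g (k, a, b)).2 Phi.
Proof.
apply: funext => x; apply: funext => i; case: g; rewrite /Nf /=.
- by case: b; congr (_ (+) Phi _ _); ring.
- by case: b; congr (_ (+) Phi _ _); ring.
- rewrite -addNb; congr (~~ a (+) Phi _ _).
  by apply: funext => z; rewrite addbN addNb.
- congr (a (+) Phi _ _).
    by apply: funext => z; case: b => /=; rewrite ?opprK.
  by case: b => /=; ring.
Qed.

Lemma Nf0 Phi : Nf 0 false false Phi = Phi.
Proof. by apply: funext => x; apply: funext => i; rewrite /Nf addr0. Qed.

Lemma act_T2_Nf tau Phi : exists k a b, act_T2 tau Phi = Nf k a b Phi.
Proof.
elim: tau => [|g t [k [a [b IH]]]]; first by exists 0, false, false; rewrite Nf0.
by rewrite /= IH act_gen_Nf; eexists; eexists; eexists.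
Qed.

Lemma Nf_T2_step tau k a b g :
  (forall Phi, act_T2 tau Phi = Nf k a b Phi) ->
  forall Phi, act_T2 (g :: tau) Phi =
     Nf (step g (k, a, b)).1.1 (step g (k, a, b)).1.2 (step g (k, a, b)).2 Phi.
Proof. by move=> H Phi; rewrite /= H act_gen_Nf. Qed.

Lemma Nf_T2 k a b : exists tau, forall Phi, act_T2 tau Phi = Nf k a b Phi.
Proof.
have H0 : exists tau, forall Phi, act_T2 tau Phi = Nf 0 false b Phi.
  case: b; last by exists [::] => Phi; rewrite Nf0.
  exists [:: Gr] => Phi; have := Nf_T2_step (tau := [::]) (k := 0) (a := false) (b := false) Gr.
  by move=> -> //= Phi'; rewrite Nf0 // oppr0.
have H1 : exists tau, forall Phi, act_T2 tau Phi = Nf 0 a b Phi.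
  case: H0 => tau Ht; case: a; last by exists tau.
  by exists (Gc :: tau) => Phi; rewrite (Nf_T2_step _ Ht).
case: H1 => tau Ht.
have Hp : forall m : nat, exists tau, forall Phi, act_T2 tau Phi = Nf m%:Z a b Phi.
  elim=> [|m [t Htm]]; first by exists tau.
  exists (Gsigma :: t) => Phi; rewrite (Nf_T2_step _ Htm) /=.
  by rewrite -addn1 PoszD.
have Hn : forall m : nat, exists tau, forall Phi, act_T2 tau Phi = Nf (- m%:Z) a b Phi.
  elim=> [|m [t Htm]]; first by exists tau => Phi; rewrite oppr0.
  exists (Gsigma_inv :: t) => Phi; rewrite (Nf_T2_step _ Htm) /=.
  by rewrite -addn1 PoszD opprD.
case: k => m; first exact: Hp.
by rewrite NegzE; apply: Hn.
Qed.

Definition ginv (g : gen) : gen :=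
  match g with Gsigma => Gsigma_inv | Gsigma_inv => Gsigma | Gc => Gc | Gr => Gr end.

Lemma act_gen_inv g Phi : act_gen (ginv g) (act_gen g Phi) = Phi.
Proof.
apply: funext => x; apply: funext => i; case: g => /=.
- by rewrite subrK.
- by rewrite addrK.
- rewrite negbK; congr (Phi _ _); by apply: funext => z; rewrite negbK.
- rewrite opprK; congr (Phi _ _); by apply: funext => z; rewrite opprK.
Qed.

Lemma act_T2_cat t1 t2 Phi : act_T2 (t1 ++ t2) Phi = act_T2 t1 (act_T2 t2 Phi).
Proof. by rewrite /act_T2 foldr_cat. Qed.

Lemma act_T2_inv tau Phi : act_T2 (rev (map ginv tau)) (act_T2 tau Phi) = Phi.
Proof.
elim: tau Phi => [//|g t IH] Phi.
by rewrite /= rev_cons -cats1 act_T2_cat /= act_gen_inv IH.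
Qed.

Lemma gcong_refl Phi : gcong Phi Phi.
Proof. by exists [::]. Qed.

Lemma gcong_sym Phi Psi : gcong Phi Psi -> gcong Psi Phi.
Proof. by case=> tau ->; exists (rev (map ginv tau)); rewrite act_T2_inv. Qed.

Lemma gcong_trans Phi Psi Chi : gcong Phi Psi -> gcong Psi Chi -> gcong Phi Chi.
Proof. by case=> t1 -> [t2 ->]; exists (t2 ++ t1); rewrite act_T2_cat. Qed.
Definition pk n (k : int) (b : bool) (j : 'I_n) : int :=
  if b then k - (j.+1 : nat)%:Z else k + (j.+1 : nat)%:Z.
Definition vw n (p : 'I_n -> int) (a : bool) (x : config) : word n :=
  [ffun j => a (+) x (p j)].
Definition RelK n (k : int) (a b : bool) (f g : rule n) :=
  forall x : config, g (vw (pk 0 false) false x) = a (+) f (vw (pk k b) a x).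

Lemma NfPhiN n k a b (f : rule n) x i :
  Nf k a b (PhiN f) x i = a (+) f (vw (pk (i + k) b) a x).
Proof.
rewrite /Nf /PhiN /vw /pk; congr (_ (+) f _); apply/ffunP => j; rewrite !ffunE.
by case: b => //=; rewrite opprD opprK addrC.
Qed.

Definition shiftc (x : config) (i : int) : config := fun z => x (z + i).

Lemma vw_shift n k b a x i :
  vw (pk (i + k) b) a x = vw (n := n) (pk k b) a (shiftc x i).
Proof.
apply/ffunP => j; rewrite !ffunE /shiftc /pk.
by case: b; congr (_ (+) x _); ring.
Qed.

Lemma gconvP n (f g : rule n) :
  gcong (PhiN f) (PhiN g) <-> exists k a b, RelK k a b f g.
Proof.
split.
  case=> tau; have [k [a [b ->]]] := act_T2_Nf tau (PhiN f) => H.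
  exists k, a, b => x.
  have /= E := congr1 (fun Phi => Phi x 0) H.
  by rewrite NfPhiN add0r in E; rewrite -E.
case=> k [a [b HR]]; have [tau Ht] := Nf_T2 k a b.
exists tau; rewrite Ht; apply: funext => x; apply: funext => i.
rewrite NfPhiN vw_shift -HR -vw_shift addr0.
by [].
Qed.

Definition Rel n (f g : rule n) : bool := `[< gcong (PhiN f) (PhiN g) >].

Lemma Rel_equiv n : equivalence_rel (@Rel n).
Proof.
move=> f g h; split; first by apply/asboolP; apply: gcong_refl.
move=> /asboolP Hfg; apply/asboolP/asboolP => H.
  exact: gcong_trans (gcong_sym Hfg) H.
exact: gcong_trans Hfg H.
Qed.
Definition supp m (f : rule m) : {set 'I_m} :=
  [set i | [exists w, f w != f (flip w i)]].

Lemma irreducibleE m (f : rule m) : irreducible f = (supp f == setT).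
Proof.
apply/forallP/eqP => [H | H i].
  by apply/setP => i; rewrite !inE; apply: H.
by have := in_setT i; rewrite -H inE.
Qed.

Definition xflip (x : config) (z : int) : config :=
  fun y => if y == z then ~~ x y else x y.

Lemma ess_vw m (p : 'I_m -> int) (p_inj : injective p) (a c : bool)
    (h : rule m) z :
  (exists x, c (+) h (vw p a x) != c (+) h (vw p a (xflip x z))) <->
  exists2 j, p j = z & j \in supp h.
Proof.
split.
  case=> x Hx; case: (pickP (fun j => p j == z)) => [j /eqP Hj | Hno].
    exists j => //; rewrite inE; apply/existsP; exists (vw p a x).
    have E : vw p a (xflip x z) = flip (vw p a x) j.
      apply/ffunP => j'; rewrite !ffunE /xflip -Hj (inj_eq p_inj).
      by case: (j' == j); rewrite ?addbN.
    by rewrite E in Hx; apply: contra Hx => /eqP ->.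
  suff E : vw p a (xflip x z) = vw p a x by rewrite E eqxx in Hx.
  by apply/ffunP => j'; rewrite !ffunE /xflip Hno.
case=> j Hj; rewrite inE => /existsP [w Hw].
pose x := fun y => [exists j', (p j' == y) && (a (+) w j')].
have xv : forall j'', x (p j'') = a (+) w j''.
  move=> j''; apply/existsP/idP => [[j' /andP [/eqP /p_inj -> //]] | H].
  by exists j''; rewrite eqxx.
exists x.
have -> : vw p a x = w by apply/ffunP => j'; rewrite !ffunE xv addbA addbb.
have -> : vw p a (xflip x z) = flip w j.
  apply/ffunP => j'; rewrite !ffunE /xflip xv -Hj (inj_eq p_inj).
  by case: (j' == j); rewrite ?addbN addbA addbb.
by move: Hw; case: c; case: (h w); case: (h (flip w j)).
Qed.

Lemma supp_dep m (f : rule m) (w w' : word m) :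
  (forall j, j \in supp f -> w j = w' j) -> f w = f w'.
Proof.
move Hd : #|[set j | w j != w' j]| => d.
elim: d w Hd => [|d IH] w Hd Hag.
  have /eqP := cards0_eq Hd => /eqP E0; suff -> : w = w' by [].
  apply/ffunP => j.
  by apply/eqP; have := in_set0 j; rewrite -E0 inE => /negbFE.
have : (0 < #|[set j | w j != w' j]|)%N by rewrite Hd.
case/card_gt0P => j; rewrite inE => Hj.
have Hns : j \notin supp f by apply: contra Hj => /Hag ->.
have -> : f w = f (flip w j).
  by move: Hns; rewrite inE => /existsPn /(_ w) /negbNE /eqP.
apply: IH.
  have : #|[set j | w j != w' j]| = ((j \in [set j | w j != w' j]) +
          #|[set j | w j != w' j] :\ j|)%N by rewrite -cardsD1.
  rewrite Hd inE Hj add1n => -[->]; apply: eq_card => j'.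
  rewrite !inE ffunE; case: (eqVneq j' j) => [-> | ne] //=.
  by move: Hj; case: (w j); case: (w' j).
move=> j' Hj'; rewrite ffunE; case: (eqVneq j' j) => [E|_]; last exact: Hag.
by rewrite -E Hj' in Hns.
Qed.
Lemma pk_inj n k b : injective (@pk n k b).
Proof.
move=> j j'; rewrite /pk => E; apply: val_inj => /=.
by case: b E => E; lia.
Qed.

Lemma toZ_pk n (M : {set 'I_n}) k b z :
  (exists2 j, pk k b j = z & j \in M) <-> toZ M (if b then k - z else z - k).
Proof.
split.
  case=> j <- Hj; apply/existsP; exists j; rewrite Hj /=; apply/eqP.
  by rewrite /pk; case: b; ring.
move=> /existsP [j /andP [Hj /eqP E]]; exists j => //.
by rewrite /pk; case: b E => E; lia.
Qed.

Lemma toZ_ess n k b a c (h : rule n) z :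
  toZ (supp h) (if b then k - z else z - k) <->
  exists x, c (+) h (vw (pk k b) a x) != c (+) h (vw (pk k b) a (xflip x z)).
Proof.
rewrite -toZ_pk; split => H; first by apply/ess_vw => //; apply: pk_inj.
by apply/(ess_vw (@pk_inj n k b) a c).
Qed.

Lemma RelK_supp n k a b (f g : rule n) :
  RelK k a b f g -> forall z, toZ (supp g) z = toZ (supp f) (if b then k - z else z - k).
Proof.
move=> H z.
have -> : toZ (supp g) z = toZ (supp g) (if false then 0 - z else z - 0) by rewrite subr0.
apply/idP/idP.
  move=> /(toZ_ess 0 false false false) [x Hx].
  by apply/(toZ_ess k b a a); exists x; rewrite -!H.
move=> /(toZ_ess k b a a) [x Hx].
by apply/(toZ_ess 0 false false false); exists x; rewrite !H.
Qed.

Lemma toZ_nat n (M : {set 'I_n}) (j : 'I_n) : toZ M (j.+1 : nat)%:Z = (j \in M).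
Proof.
apply/existsP/idP => [[j' /andP [Hj' /eqP E]] | H]; last by exists j; rewrite H eqxx.
suff -> : j = j' by [].
by apply: val_inj => /=; lia.
Qed.

Lemma toZ_inj n (M M' : {set 'I_n}) : (forall z, toZ M z = toZ M' z) -> M = M'.
Proof. by move=> H; apply/setP => j; rewrite -!toZ_nat H. Qed.

Lemma scong_refl n (M : {set 'I_n}) : scong M M.
Proof. by exists 0; left => z; rewrite subr0. Qed.

Lemma scong_sym n (M M' : {set 'I_n}) : scong M M' -> scong M' M.
Proof.
case=> j [] H.
  by exists (- j); left => z; rewrite H; congr toZ; ring.
by exists j; right => z; rewrite H; congr toZ; ring.
Qed.

Lemma scong_trans n (M M' M'' : {set 'I_n}) :
  scong M M' -> scong M' M'' -> scong M M''.
Proof.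
case=> j1 [] H1 [j2 [] H2].
- by exists (j1 + j2); left => z; rewrite H2 H1; congr toZ; ring.
- by exists (j2 - j1); right => z; rewrite H2 H1; congr toZ; ring.
- by exists (j2 + j1); right => z; rewrite H2 H1; congr toZ; ring.
- by exists (j2 - j1); left => z; rewrite H2 H1; congr toZ; ring.
Qed.

Definition scongb n (M M' : {set 'I_n}) : bool := `[< scong M M' >].

Lemma scongb_equiv n : equivalence_rel (@scongb n).
Proof.
move=> M M' M''; split; first by apply/asboolP; apply: scong_refl.
move=> /asboolP H; apply/asboolP/asboolP => H'.
  exact: scong_trans (scong_sym H) H'.
exact: scong_trans H H'.
Qed.

Lemma Rel_scong n (f g : rule n) : Rel f g -> scong (supp f) (supp g).
Proof.
move=> /asboolP /gconvP [k [a [b /RelK_supp H]]].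
by exists k; case: b H => H; [right | left].
Qed.
Section Classes.
Variable T : finType.

Definition cls (D : {pred T}) (E : rel T) x : {set T} := [set y in D | E x y].
Definition classes (D : {pred T}) (E : rel T) : {set {set T}} :=
  [set cls D E x | x in D].

Lemma equiv_refl (E : rel T) : equivalence_rel E -> forall x, E x x.
Proof. by move=> HE x; case: (HE x x x). Qed.

Lemma equiv_sym (E : rel T) : equivalence_rel E -> forall x y, E x y -> E y x.
Proof.
by move=> HE x y Hxy; have [_ /(_ Hxy) <-] := HE x y x; apply: equiv_refl.
Qed.

Lemma equiv_trans (E : rel T) : equivalence_rel E ->
  forall x y z, E x y -> E y z -> E x z.
Proof. by move=> HE x y z Hxy; have [_ /(_ Hxy) ->] := HE x y z. Qed.

Lemma cls_eq D E (HE : equivalence_rel E) x y :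
  x \in D -> y \in D -> (cls D E x == cls D E y) = E x y.
Proof.
move=> Hx Hy; apply/eqP/idP => [H | H].
  have : y \in cls D E y by rewrite inE Hy equiv_refl.
  by rewrite -H inE => /andP [_ ->].
by apply/setP => z; rewrite !inE; have [_ /(_ H) ->] := HE x y z.
Qed.

End Classes.

Lemma card_imset_kernel (T U U' : finType) (F : T -> U) (G : T -> U') (D : {pred T}) :
  {in D &, forall x y, (F x == F y) = (G x == G y)} ->
  #|[set F x | x in D]| = #|[set G x | x in D]|.
Proof.
move=> HK; case: (pickP (mem D)) => [x0 Hx0 | D0]; last first.
  have E0 : forall (V : finType) (H : T -> V), #|[set H x | x in D]| = 0%N.
    move=> V H; apply/eqP; rewrite -leqn0; apply: leq_trans (leq_imset_card _ _) _.
    by rewrite leqn0; apply/eqP/eq_card0 => x; apply: D0.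
  by rewrite !E0.
pose H u := G (odflt x0 [pick x in D | F x == u]).
have HF : {in D, forall x, H (F x) = G x}.
  move=> x Hx; rewrite /H; case: pickP => [y /andP [Hy /eqP Hyx] | Hn] /=.
    by apply/eqP; rewrite -HK // Hyx.
  by have := Hn x; rewrite Hx eqxx.
have -> : [set G x | x in D] = [set H u | u in [set F x | x in D]].
  by rewrite -imset_comp; apply: eq_in_imset => x Hx /=; rewrite HF.
rewrite (card_in_imset (f := H)) // => u1 u2 /imsetP [x1 Hx1 ->] /imsetP [x2 Hx2 ->].
by rewrite !HF // => /eqP; rewrite -HK // => /eqP.
Qed.

Lemma card_classes_transfer (T1 T2 : finType) (D1 : {pred T1}) (E1 : rel T1)
    (D2 : {pred T2}) (E2 : rel T2) (phi : T1 -> T2) :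
  equivalence_rel E1 -> equivalence_rel E2 ->
  {in D1, forall x, phi x \in D2} ->
  {in D1 &, forall x y, E2 (phi x) (phi y) = E1 x y} ->
  (forall y, y \in D2 -> exists2 x, x \in D1 & E2 (phi x) y) ->
  #|classes D1 E1| = #|classes D2 E2|.
Proof.
move=> HE1 HE2 phiD phiE phiS.
have -> : classes D2 E2 = [set cls D2 E2 (phi x) | x in D1].
  apply/setP => K; apply/imsetP/imsetP => [[y Hy ->] | [x Hx ->]].
    case: (phiS y Hy) => x Hx Exy; exists x => //.
    by apply/eqP; rewrite cls_eq // ?phiD //; apply: equiv_sym.
  by exists (phi x) => //; apply: phiD.
apply: card_imset_kernel => x y Hx Hy.
by rewrite !cls_eq ?phiD // phiE.
Qed.

Lemma card_classes_partition (T P : finType) (D : {pred T}) (E : rel T)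
    (pi : T -> P) (Ps : {set P}) :
  equivalence_rel E ->
  {in D, forall x, pi x \in Ps} ->
  {in D &, forall x y, E x y -> pi x = pi y} ->
  #|classes D E| = (\sum_(p in Ps) #|classes [pred x in D | pi x == p] E|)%N.
Proof.
move=> HE piD piE; case: (pickP (mem D)) => [x0 Hx0 | D0]; last first.
  have E0 : forall D' : {pred T}, {subset D' <= D} -> #|classes D' E| = 0%N.
    move=> D' sD; apply/eqP; rewrite -leqn0; apply: leq_trans (leq_imset_card _ _) _.
    by rewrite leqn0; apply/eqP/eq_card0 => x; apply/negbTE; apply: contraFN (D0 x); apply: sD.
  rewrite E0 // big1 // => p _; apply: E0 => x; rewrite inE => /andP [] //.
pose piK (K : {set T}) := pi (odflt x0 [pick x in K]).
have piKc : {in D, forall x, piK (cls D E x) = pi x}.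
  move=> x Hx; rewrite /piK; case: pickP => [y | Hn] /=.
    by rewrite inE => /andP [Hy Exy]; symmetry; apply: piE.
  by have := Hn x; rewrite inE Hx equiv_refl.
rewrite -sum1_card (partition_big piK (mem Ps)) /=; last first.
  by move=> K /imsetP [x Hx ->]; rewrite piKc // piD.
apply: eq_bigr => p _; rewrite sum1dep_card; apply: eq_card => K.
rewrite !inE; apply/andP/imsetP => [[/imsetP [x Hx ->] /eqP Hp] | [x]].
  rewrite piKc // in Hp; exists x; first by rewrite inE Hx Hp eqxx.
  apply/setP => y; rewrite !inE; apply/andP/andP => [[Hy Exy] | [/andP [Hy _] Exy]] //.
  by rewrite Hy -Hp (piE x y) ?eqxx.
rewrite inE => /andP [Hx /eqP Hp] ->.
have -> : cls [pred x0 in D | pi x0 == p] E x = cls D E x.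
  apply/setP => y; rewrite !inE; apply/andP/andP => [[/andP [Hy _] Exy] | [Hy Exy]] //.
  by rewrite Hy -Hp (piE x y) ?eqxx.
by split; [apply/imsetP; exists x | rewrite piKc // Hp].
Qed.
Section Enum.
Variables (n : nat) (M : {set 'I_n}).

Definition ev (i : 'I_#|M|) : 'I_n := Order.enum_val i.

Lemma evP i : ev i \in M.
Proof. exact: Order.enum_valP. Qed.

Lemma ev_inj : injective ev.
Proof. exact: Order.enum_val_inj. Qed.

Lemma ev_onto j : j \in M -> exists i, ev i = j.
Proof. by move=> Hj; exists (Order.enum_rank_in Hj j); apply: Order.enum_rankK_in. Qed.

Lemma ev_le i j : (ev i <= ev j)%N = (i <= j)%N.
Proof.
have := @Order.le_enum_val _ 'I_n (@le_total _ _) (mem M) i j.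
by rewrite /ev.
Qed.

Lemma ev_lt i j : (ev i < ev j)%N = (i < j)%N.
Proof. by rewrite !ltnNge ev_le. Qed.

Definition rk (j : 'I_n) : nat := #|[set j' in M | (j' < j)%N]|.

Lemma card_lt_ord m (i : 'I_m) : #|[set i' : 'I_m | (i' < i)%N]| = i.
Proof.
have Hle : (i <= m)%N by apply: ltnW.
have winj : injective (widen_ord Hle).
  by move=> a b H; apply: val_inj; exact: (congr1 val H).
rewrite -[in RHS](card_ord i) -(card_imset _ winj).
apply: eq_card => i'; rewrite !inE; apply/idP/imsetP => [Hi | [k _ ->]] //=.
by exists (Ordinal Hi) => //; apply: val_inj.
Qed.

Lemma rk_ev i : rk (ev i) = i.
Proof.
rewrite /rk -[in RHS](card_lt_ord i) -(card_imset _ ev_inj).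
apply: eq_card => j; rewrite !inE; apply/andP/imsetP => [[Hj Hlt] | [i' Hi' ->]].
  have [i' Hi'] := ev_onto Hj; exists i'; last by [].
  by rewrite inE -ev_lt Hi'.
by rewrite evP; rewrite inE in Hi'; rewrite ev_lt.
Qed.

Lemma rk_lt (j j' : 'I_n) : j \in M -> (j < j')%N -> (rk j < rk j')%N.
Proof.
move=> Hj Hlt; apply: proper_card; rewrite properE; apply/andP; split.
  by apply/subsetP => x; rewrite !inE => /andP [-> /= H]; apply: ltn_trans Hlt.
by apply/subsetPn; exists j; rewrite !inE ?Hj ?Hlt ?ltnn.
Qed.

Lemma rk_inj (j j' : 'I_n) : j \in M -> j' \in M -> rk j = rk j' -> j = j'.
Proof.
move=> Hj Hj' E; apply: val_inj; case: (ltngtP j j') => // H.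
  by have := rk_lt Hj H; rewrite E ltnn.
by have := rk_lt Hj' H; rewrite E ltnn.
Qed.

Lemma sum_ind (A : {pred 'I_n}) (P : pred 'I_n) :
  (\sum_(x in A) (P x : nat))%N = #|[set x in A | P x]|.
Proof.
rewrite -sum1_card big_mkcond [in RHS]big_mkcond /=; apply: eq_bigr => x _.
by rewrite !inE; case: (x \in A); case: (P x).
Qed.

Lemma card_split j : j \in M ->
  #|M| = (rk j + 1 + #|[set j' in M | (j < j')%N]|)%N.
Proof.
move=> Hj.
have E1 : (\sum_(x in M) ((x == j) : nat) = 1)%N.
  by rewrite (bigD1 j) //= eqxx big1 // => x /andP [_ /negbTE ->].
rewrite /rk -!sum_ind -E1 -sum1_card -!big_split /=; apply: eq_bigr => x _.
rewrite -val_eqE /=.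
by case: (ltngtP x j) => H; rewrite ?(ltn_eqF H) ?(gtn_eqF H) ?H ?eqxx ?ltnn.
Qed.

Lemma reflect_ev (sg : 'I_n -> 'I_n) :
  {in M, forall j, sg j \in M} ->
  {in M &, forall j j' : 'I_n, (j < j')%N -> (sg j' < sg j)%N} ->
  forall i, sg (ev i) = ev (rev_ord i).
Proof.
move=> sgM sgD.
have sg_inj : {in M &, injective sg}.
  move=> j j' Hj Hj' E; apply: val_inj; case: (ltngtP j j') => // H.
    by have := sgD _ _ Hj Hj' H; rewrite E ltnn.
  by have := sgD _ _ Hj' Hj H; rewrite E ltnn.
have sgMM : sg @: M = M.
  apply/eqP; rewrite eqEcard (card_in_imset sg_inj) leqnn andbT.
  by apply/subsetP => y /imsetP [x Hx ->]; apply: sgM.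
have rk_sg : {in M, forall j, rk (sg j) = #|[set j' in M | (j < j')%N]|}.
  move=> j Hj; rewrite /rk -(card_in_imset (f := sg) (D := [set j' in M | (j < j')%N])); last first.
    by move=> x y; rewrite !inE => /andP [Hx _] /andP [Hy _]; apply: sg_inj.
  apply: eq_card => y; rewrite !inE; apply/andP/imsetP => [[Hy Hlt] | [x]].
    have : y \in sg @: M by rewrite sgMM.
    case/imsetP => x Hx Ey; exists x => //; rewrite inE Hx /=.
    case: (ltngtP j x) => // H.
      by have := sgD _ _ Hx Hj H; rewrite -Ey ltnNge ltnW.
    have E : j = x by apply: val_inj.
    by move: Hlt; rewrite Ey -E ltnn.
  by rewrite inE => /andP [Hx Hlt] ->; rewrite sgM // sgD.
move=> i; apply: rk_inj; [by apply: sgM; apply: evP | exact: evP |].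
rewrite rk_sg ?evP // rk_ev /=.
have := card_split (evP i); rewrite rk_ev.
have key : forall N c k : nat, N = (k + 1 + c)%N -> c = (N - k.+1)%N by move=> *; lia.
exact: key.
Qed.

End Enum.
Section Lift.
Variables (n : nat) (M : {set 'I_n}).

Definition ext (u : word #|M|) : word n := [ffun j : 'I_n => [exists i : 'I_#|M|, (ev i == j) && u i]].
Definition restr (f : rule n) : rule #|M| := [ffun u => f (ext u)].
Definition lift (h : rule #|M|) : rule n := [ffun w : word n => h [ffun i : 'I_#|M| => w (ev i)]].

Lemma ext_ev u i : ext u (ev i) = u i.
Proof.
rewrite ffunE; apply/existsP/idP => [[i' /andP [/eqP /(@ev_inj n M) -> //]] | H].
by exists i; rewrite eqxx.
Qed.

Lemma ffun_ext_ev u : [ffun i : 'I_#|M| => ext u (ev i)] = u.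
Proof. by apply/ffunP => i; rewrite ffunE ext_ev. Qed.

Lemma restr_lift h : restr (lift h) = h.
Proof. by apply/ffunP => u; rewrite !ffunE ffun_ext_ev. Qed.

Lemma lift_restr f : supp f \subset M -> lift (restr f) = f.
Proof.
move=> sub; apply/ffunP => w; rewrite !ffunE; apply: supp_dep => j Hj.
have [i <-] := ev_onto (subsetP sub j Hj).
by rewrite ext_ev ffunE.
Qed.

Lemma supp_lift h : supp (lift h) = (@ev n M) @: supp h.
Proof.
apply/setP => j; rewrite inE; apply/existsP/imsetP => [[w Hw] | [i Hi ->]].
  rewrite !ffunE in Hw.
  case: (pickP (fun i : 'I_#|M| => ev i == j)) => [i /eqP Hi | Hno].
    exists i => //; rewrite inE; apply/existsP; exists [ffun i : 'I_#|M| => w (ev i)].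
    have E : [ffun i0 : 'I_#|M| => flip w j (ev i0)] = flip [ffun i : 'I_#|M| => w (ev i)] i.
      by apply/ffunP => i0; rewrite !ffunE -Hi (inj_eq (@ev_inj n M)).
    by rewrite -E.
  have E : [ffun i0 : 'I_#|M| => flip w j (ev i0)] = [ffun i0 : 'I_#|M| => w (ev i0)].
    by apply/ffunP => i0; rewrite !ffunE Hno.
  by rewrite E eqxx in Hw.
rewrite inE in Hi; case/existsP: Hi => u Hu; exists (ext u); rewrite !ffunE.
have -> : [ffun i0 : 'I_#|M| => flip (ext u) (ev i) (ev i0)] = flip u i.
  apply/ffunP => i0; have X := ext_ev u i0; rewrite ffunE in X.
  by rewrite !ffunE (inj_eq (@ev_inj n M)) X.
have -> // : [ffun i0 : 'I_#|M| => ext u (ev i0)] = u.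
by apply/ffunP => i0; rewrite ffunE ext_ev.
Qed.

Lemma ev_imsetT : (@ev n M) @: setT = M.
Proof.
apply/setP => j; apply/imsetP/idP => [[i _ ->] | Hj]; first exact: evP.
by have [i <-] := ev_onto Hj; exists i.
Qed.

Lemma irr_lift h : irreducible h -> supp (lift h) = M.
Proof. by rewrite irreducibleE supp_lift => /eqP ->; apply: ev_imsetT. Qed.

Lemma irr_restr f : supp f = M -> irreducible (restr f).
Proof.
move=> Hf; rewrite irreducibleE eqEcard subsetT /=.
have : supp (lift (restr f)) = M by rewrite lift_restr ?Hf.
rewrite supp_lift => E.
have := congr1 (fun A : {set 'I_n} => #|A|) E; rewrite card_imset /=; last exact: (@ev_inj n M).
by move=> ->; rewrite cardsT card_ord.
Qed.

Lemma exists_succ (P : pred 'I_n) (j : 'I_n) :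
  [exists j' : 'I_n, ((j.+1 : nat)%:Z == (j'.+1 : nat)%:Z) && P j'] = P j.
Proof.
apply/existsP/idP => [[j' /andP [/eqP E Hj']] | Hj]; last by exists j; rewrite eqxx.
suff -> : j = j' by [].
by apply: val_inj => /=; lia.
Qed.

Lemma sigma_ev (k : int) : (forall z, toZ M z = toZ M (k - z)) ->
  forall i : 'I_#|M|, k - ((ev i).+1 : nat)%:Z = ((ev (rev_ord i)).+1 : nat)%:Z.
Proof.
move=> HS.
have Hex : forall j, j \in M -> exists2 j', j' \in M & ((j'.+1 : nat)%:Z = k - (j.+1 : nat)%:Z).
  move=> j Hj; have := HS (j.+1 : nat)%:Z; rewrite toZ_nat Hj.
  by move=> /esym /existsP [j' /andP [Hj' /eqP E]]; exists j' => //; rewrite -E.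
pose sg (j : 'I_n) := odflt j [pick j' in M | ((j'.+1 : nat)%:Z == k - (j.+1 : nat)%:Z)].
have sgP : forall j, j \in M -> sg j \in M /\ (((sg j).+1 : nat)%:Z = k - (j.+1 : nat)%:Z).
  move=> j Hj; rewrite /sg; case: pickP => [j' /andP [Hj' /eqP E] | Hn] //=.
  by have [j' Hj' E] := Hex j Hj; have := Hn j'; rewrite Hj' E eqxx.
move=> i; have := @reflect_ev n M sg _ _ i.
have [_ E1] := sgP _ (evP i); rewrite -E1 => -> //.
  by move=> j Hj; case: (sgP j Hj).
move=> j j' Hj Hj' Hlt; have [_ E] := sgP j Hj; have [_ E'] := sgP j' Hj'.
lia.
Qed.

Lemma trans_k0 (k : int) j : (forall z, toZ M z = toZ M (z - k)) -> j \in M -> k = 0.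
Proof.
move=> HT Hj.
case: (@arg_maxnP _ j (mem M) (fun j' : 'I_n => (j' : nat)) Hj) => mx Hmx0 Hmax.
have Hmx : mx \in M := Hmx0.
have := HT ((mx.+1 : nat)%:Z + k); rewrite addrK toZ_nat Hmx.
move=> /existsP [j1 /andP [Hj1 /eqP E1]].
have := HT ((mx.+1 : nat)%:Z); rewrite toZ_nat Hmx.
move=> /esym /existsP [j2 /andP [Hj2 /eqP E2]].
have := Hmax j1 Hj1; have := Hmax j2 Hj2; lia.
Qed.

End Lift.

Definition cwa m a (u : word m) : word m := if a then cw u else u.

Lemma cwaE m a (u : word m) i : cwa a u i = a (+) u i.
Proof. by case: a; rewrite /cwa ?ffunE. Qed.

Lemma actS2E m (b a : bool) (F : rule m) u :
  actS2 (b, a) F u = a (+) F (cwa a (if b then rw u else u)).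
Proof. by rewrite /actS2 /=; case: a; case: b; rewrite ?ffunE. Qed.

Definition EMr n (M : {set 'I_n}) : rel (rule #|M|) :=
  fun h h' => [exists a : S2, (a.1 ==> `[< Sym M >]) && (h' == actS2 a h)].

Lemma Rel_EM n (M : {set 'I_n}) (f g : rule n) :
  supp f = M -> supp g = M -> Rel f g = @EMr n M (restr M f) (restr M g).
Proof.
move=> Hf Hg; apply/idP/idP.
  move=> /asboolP /gconvP [k [a [b H]]].
  have HZ := RelK_supp H; rewrite Hf Hg in HZ.
  apply/existsP; exists (b, a); apply/andP; split.
    by case: b H HZ => //= _ HZ; apply/asboolP; exists k.
  apply/eqP/ffunP => u; rewrite actS2E !ffunE.
  pose x := fun z : int => [exists j : 'I_n, (z == (j.+1 : nat)%:Z) && ext u j].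
  have Ex : vw (pk 0 false) false x = ext u.
    by apply/ffunP => j; rewrite ffunE /x /pk add0r exists_succ.
  rewrite -Ex H; congr (a (+) _); apply: supp_dep; rewrite Hf => j Hj.
  have [i <-] := ev_onto Hj; rewrite ext_ev cwaE ffunE /x; congr (a (+) _).
  case: b HZ H => HZ H.
    by rewrite /pk (sigma_ev HZ) exists_succ ext_ev ffunE.
  by rewrite /pk (trans_k0 HZ (evP i)) add0r exists_succ ext_ev.
move=> /existsP [[b c] /andP [Hs /eqP E]]; apply/asboolP/gconvP.
have Eg : g = lift (restr M g) by rewrite lift_restr // Hg.
case: b Hs E => /= Hs E.
  case/asboolP: Hs => k HS; exists k, c, true => x.
  rewrite {1}Eg ffunE E actS2E ffunE; congr (c (+) _).
  apply: supp_dep; rewrite Hf => j Hj; have [i <-] := ev_onto Hj.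
  rewrite ext_ev cwaE !ffunE; congr (c (+) x _).
  by rewrite /pk add0r (sigma_ev HS).
exists 0, c, false => x.
rewrite {1}Eg ffunE E actS2E ffunE; congr (c (+) _).
apply: supp_dep; rewrite Hf => j Hj; have [i <-] := ev_onto Hj.
by rewrite ext_ev cwaE !ffunE.
Qed.
Section S2act.
Variable m : nat.
Implicit Types (f g h : rule m) (w : word m).

Lemma cwK w : cw (cw w) = w.
Proof. by apply/ffunP => i; rewrite !ffunE negbK. Qed.
Lemma rwK w : rw (rw w) = w.
Proof. by apply/ffunP => i; rewrite !ffunE rev_ordK. Qed.
Lemma cw_rw w : cw (rw w) = rw (cw w).
Proof. by apply/ffunP => i; rewrite !ffunE. Qed.
Lemma cw_flip w i : cw (flip w i) = flip (cw w) i.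
Proof. by apply/ffunP => j; rewrite !ffunE; case: (j == i). Qed.
Lemma rw_flip w i : rw (flip w (rev_ord i)) = flip (rw w) i.
Proof.
apply/ffunP => j; rewrite !ffunE.
by rewrite (inj_eq (@rev_ord_inj m)).
Qed.

Lemma chatK f : chat (chat f) = f.
Proof. by apply/ffunP => w; rewrite !ffunE cwK negbK. Qed.
Lemma rhatK f : rhat (rhat f) = f.
Proof. by apply/ffunP => w; rewrite !ffunE rwK. Qed.
Lemma chat_rhat f : chat (rhat f) = rhat (chat f).
Proof. by apply/ffunP => w; rewrite !ffunE cw_rw. Qed.

Lemma actS2_comp a a' f :
  actS2 a (actS2 a' f) = actS2 (a.1 (+) a'.1, a.2 (+) a'.2) f.
Proof.
case: a => [[] []]; case: a' => [[] []];
  by rewrite /actS2 /= ?chat_rhat ?chatK ?rhatK ?chat_rhat ?chatK ?rhatK.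
Qed.

Lemma actS2_inv a f : actS2 a (actS2 a f) = f.
Proof. by rewrite actS2_comp !addbb. Qed.

Lemma actS2_inj a : injective (@actS2 m a).
Proof. exact: can_inj (actS2_inv a). Qed.

Lemma irr_chat f : irreducible f -> irreducible (chat f).
Proof.
move=> /forallP H; apply/forallP => i; have /existsP [w Hw] := H i.
apply/existsP; exists (cw w); rewrite !ffunE cwK -cw_flip cwK.
by move: Hw; case: (f w); case: (f (flip w i)).
Qed.

Lemma irr_rhat f : irreducible f -> irreducible (rhat f).
Proof.
move=> /forallP H; apply/forallP => i; have /existsP [w Hw] := H (rev_ord i).
by apply/existsP; exists (rw w); rewrite !ffunE rwK -rw_flip rwK.
Qed.

Lemma irr_act a f : irreducible f -> irreducible (actS2 a f).
Proof.
case: a => [[] []] H; rewrite /actS2 /=;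
  by repeat (apply: irr_rhat || apply: irr_chat).
Qed.

Lemma existsS2 (P : pred S2) :
  [exists a, P a] = [|| P (false, false), P (false, true), P (true, false) | P (true, true)].
Proof.
apply/existsP/idP => [[[[] []] H] | ]; rewrite ?H ?orbT //.
by case/or4P => H; eexists; apply: H.
Qed.

Definition ER (allowr : bool) : rel (rule m) :=
  fun h h' => [exists a : S2, (a.1 ==> allowr) && (h' == actS2 a h)].

Lemma ER_equiv allowr : equivalence_rel (ER allowr).
Proof.
move=> x y z; rewrite /ER; split; first by apply/existsP; exists (false, false); rewrite /= eqxx.
case/existsP => a /andP [Ha /eqP ->].
apply/existsP/existsP => [[b /andP [Hb /eqP ->]] | [b /andP [Hb /eqP ->]]].
  exists (b.1 (+) a.1, b.2 (+) a.2); rewrite actS2_comp /= -!addbA !addbb !addbF.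
  rewrite eqxx andbT; move: Ha Hb; case: (b.1); case: (a.1) => //=.
exists (b.1 (+) a.1, b.2 (+) a.2); rewrite actS2_comp eqxx andbT /=.
by move: Ha Hb; case: (b.1); case: (a.1).
Qed.

Lemma orbit_mem f : f \in orbitS2 f.
Proof. by rewrite inE; apply/existsP; exists (false, false). Qed.

Lemma orbit_act a f : orbitS2 (actS2 a f) = orbitS2 f.
Proof.
apply/setP => g; rewrite !inE; apply/existsP/existsP => [[b /eqP ->] | [b /eqP ->]].
  by exists (b.1 (+) a.1, b.2 (+) a.2); rewrite actS2_comp.
exists (b.1 (+) a.1, b.2 (+) a.2); rewrite actS2_comp /=.
by rewrite -!addbA !addbb !addbF.
Qed.

Lemma orbit_eq f g : (orbitS2 g == orbitS2 f) = (g \in orbitS2 f).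
Proof.
apply/eqP/idP => [<- | ]; first exact: orbit_mem.
by rewrite inE => /existsP [a /eqP ->]; apply: orbit_act.
Qed.

Lemma orbitE f g : (g \in orbitS2 f) =
  [|| g == f, g == chat f, g == rhat f | g == rhat (chat f)].
Proof. by rewrite inE existsS2. Qed.

Lemma stab_act a f : stab (actS2 a f) = stab f.
Proof.
apply/setP => b; rewrite !inE.
have -> : actS2 b (actS2 a f) = actS2 a (actS2 b f).
  by rewrite !actS2_comp addbC [b.2 (+) _]addbC.
by rewrite (inj_eq (@actS2_inj a)).
Qed.

Lemma stab_subE (U : {set S2}) f : (stab f \subset U) =
  [&& (false, false) \in U, (chat f == f) ==> ((false, true) \in U),
      (rhat f == f) ==> ((true, false) \in U) &
      (rhat (chat f) == f) ==> ((true, true) \in U)].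
Proof.
apply/subsetP/and4P => [H | [H1 H2 H3 H4] [[] []]]; rewrite ?inE /actS2 /=.
  split; [apply: H; rewrite inE eqxx // | | |];
    by apply/implyP => E; apply: H; rewrite inE /actS2 /= E.
- exact: implyP H4.
- exact: implyP H3.
- exact: implyP H2.
- by move=> _.
Qed.

Lemma stab_eqE (U : {set S2}) f : (stab f == U) =
  [&& (false, false) \in U, (chat f == f) == ((false, true) \in U),
      (rhat f == f) == ((true, false) \in U) &
      (rhat (chat f) == f) == ((true, true) \in U)].
Proof.
apply/eqP/and4P => [<- | [H1 H2 H3 H4]]; first by rewrite !inE /actS2 /= !eqxx.
apply/setP => -[[] []]; rewrite inE /actS2 /=.
- exact: (eqP H4).
- exact: (eqP H3).
- exact: (eqP H2).
- by rewrite eqxx.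
Qed.

Lemma AB_eq f : ([set f; chat f] == [set rhat f; rhat (chat f)]) =
  (rhat f == f) || (rhat (chat f) == f).
Proof.
apply/eqP/idP => [E | /orP [/eqP E | /eqP E]].
- have : rhat f \in [set f; chat f] by rewrite E !inE eqxx.
  rewrite !inE => /orP [-> // | /eqP H].
  by rewrite -chat_rhat H chatK eqxx orbT.
- by rewrite E -chat_rhat E.
- have E' : rhat f = chat f by rewrite -{1}E rhatK.
  by rewrite E' E setUC.
Qed.

End S2act.
Section Count.
Variable m : nat.
Let D := [pred g : rule m | irreducible g].

Lemma classes_Lbar : #|classes D (ER true)| = num_Lbar_classes m.
Proof.
rewrite /num_Lbar_classes; suff -> : classes D (ER true) = [set orbitS2 f | f in D] by [].
apply: eq_in_imset => f Hf.
apply/setP => g; rewrite !inE.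
apply/andP/existsP => [[_ /existsP [a /andP [_ H]]] | [a H]]; first by exists a.
split; first by rewrite (eqP H); apply: irr_act.
by apply/existsP; exists a; rewrite implybT.
Qed.

Lemma sum_mem (T : finType) (A B : {set T}) : B \subset A ->
  (\sum_(x in A) ((x \in B) : nat))%N = #|B|.
Proof.
move=> sBA; rewrite -sum1_card big_mkcond [in RHS]big_mkcond /=.
apply: eq_bigr => x _; case: (boolP (x \in B)) => H.
  by rewrite (subsetP sBA x H).
by case: (x \in A).
Qed.

Definition TU (U : {set S2}) :=
  [set orbitS2 f | f in [pred f : rule m | irreducible f && (stab f == U)]].

Lemma fiber f : irreducible f ->
  #|classes [pred x in D | orbitS2 x == orbitS2 f] (ER false)| =
  (1 + ((orbitS2 f \in TU U1) + (orbitS2 f \in TU Uc)))%N.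
Proof.
move=> Hf.
have memT : forall U, (orbitS2 f \in TU U) = (stab f == U).
  move=> U; apply/imsetP/idP => [[g] | H].
    rewrite inE => /andP [Hg HgU] E.
    have : g \in orbitS2 f by rewrite E orbit_mem.
    by rewrite inE => /existsP [a /eqP Ega]; rewrite -(eqP HgU) Ega stab_act.
  by exists f => //; rewrite inE Hf H.
rewrite !memT.
set Dp := [pred x in D | orbitS2 x == orbitS2 f].
have memDp : forall x, (x \in Dp) = (x \in orbitS2 f).
  move=> x; rewrite [x \in Dp]inE /= orbit_eq; apply/andP/idP => [[_ ->] // | H].
  split => //; rewrite inE /=; move: H; rewrite inE => /existsP [a /eqP ->].
  exact: irr_act.
have clsDp : forall x, x \in orbitS2 f -> cls Dp (ER false) x = [set x; chat x].
  move=> x Hx; apply/setP => y; rewrite inE memDp in_set2 /ER existsS2 /actS2 /= !orbF.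
  case: (boolP (y == x)) => [/eqP -> | _] /=; first by rewrite Hx ?eqxx.
  case: (boolP (y == chat x)) => [/eqP -> | _]; last by rewrite andbF.
  rewrite andbT; have <- : orbitS2 x = orbitS2 f.
    by apply/eqP; rewrite orbit_eq.
  by rewrite orbitE eqxx !orbT.
have -> : classes Dp (ER false) = [set [set f; chat f]; [set rhat f; rhat (chat f)]].
  apply/setP => K; apply/imsetP/idP => [[x Hx ->] | ].
    rewrite memDp in Hx; rewrite clsDp // !inE.
    move: Hx; rewrite orbitE => /or4P [] /eqP ->; rewrite ?eqxx //.
    - by rewrite chatK setUC eqxx.
    - by rewrite chat_rhat eqxx orbT.
    - by rewrite chat_rhat chatK setUC eqxx orbT.
  case/set2P => ->.
    by exists f; rewrite ?memDp ?orbit_mem ?clsDp // orbit_mem.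
  have Hr : rhat f \in orbitS2 f by rewrite orbitE eqxx !orbT.
  by exists (rhat f); rewrite ?memDp // clsDp // chat_rhat.
rewrite cards2 AB_eq !stab_eqE !inE /=.
by case: (chat f == f); case: (rhat f == f); case: (rhat (chat f) == f).
Qed.

Lemma classes_c :
  #|classes D (ER false)| = (num_Lbar_classes m + (tbar U1 m + tbar Uc m))%N.
Proof.
rewrite (card_classes_partition (pi := @orbitS2 m) (Ps := [set orbitS2 f | f in D])).
- have fib : forall p, p \in [set orbitS2 f | f in D] ->
    #|classes [pred x in D | orbitS2 x == p] (ER false)| =
    (1 + ((p \in TU U1) + (p \in TU Uc)))%N.
    by move=> p /imsetP [f Hf ->]; apply: fiber.
  rewrite (eq_bigr _ fib) !big_split /= sum1_card !sum_mem //.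
    by apply/subsetP => p /imsetP [f]; rewrite inE => /andP [Hf _] ->; apply: imset_f.
  by apply/subsetP => p /imsetP [f]; rewrite inE => /andP [Hf _] ->; apply: imset_f.
- exact: ER_equiv.
- by move=> f Hf; apply: imset_f.
- move=> x y _ _ /existsP [a /andP [_ /eqP ->]].
  by rewrite orbit_act.
Qed.

End Count.
Lemma shift_exists n (M : {set 'I_n}) (g : rule n) :
  scong M (supp g) -> exists2 f, supp f = M & Rel f g.
Proof.
case=> k HH.
have [b H] : exists b, forall z, toZ (supp g) z = toZ M (if b then k - z else z - k).
  by case: HH => H; [exists false | exists true].
pose f : rule n := [ffun w : word n => g [ffun i : 'I_n =>
   [exists j : 'I_n, (pk k b j == (i.+1 : nat)%:Z) && w j]]].
have HR : RelK k false b f g.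
  move=> x; rewrite ffunE /=; apply: supp_dep => i Hi; rewrite !ffunE /=.
  have : toZ M (if b then k - (i.+1 : nat)%:Z else (i.+1 : nat)%:Z - k).
    by rewrite -H toZ_nat.
  move/toZ_pk => [j Hj HjM].
  rewrite add0r.
  apply/idP/existsP => [Hx | [j' /andP [/eqP E Hx]]].
    by exists j; rewrite Hj eqxx /= ffunE /= Hj.
  by rewrite ffunE /= E in Hx.
have Hs : supp f = M.
  apply: toZ_inj => y; have := RelK_supp HR (if b then k - y else y + k).
  rewrite H.
  have key : forall bb : bool,
      (if bb then k - (if bb then k - y else y + k) else (if bb then k - y else y + k) - k) = y.
    by case => /=; ring.
  rewrite key.
  by move=> <-.
exists f => //; apply/asboolP/gconvP; exists k, false, b; exact: HR.
Qed.

Lemma per_class n (C : {set {set 'I_n}}) : C \in Pclasses n ->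
  #|classes [pred x in (predT : {pred rule n}) |
      [set M' | `[< scong (supp x) M' >]] == C] (@Rel n)| =
  (num_Lbar_classes #|rep C| +
   (if ~~ `[< Sym (rep C) >] then tbar U1 #|rep C| + tbar Uc #|rep C| else 0))%N.
Proof.
case/imsetP => M0 _ ->.
have HM : scong M0 (rep [set M' | `[< scong M0 M' >]]).
  rewrite /rep; case: pickP => [M' | Hn] /=; first by rewrite inE => /asboolP.
  by have := Hn M0; rewrite inE; move/asboolP: (scong_refl M0) => ->.
move: (rep _) HM => M HM.
have HC : [set M' | `[< scong M0 M' >]] = [set M' | `[< scong M M' >]].
  apply/setP => M'; rewrite !inE; apply/asboolP/asboolP => H.
    exact: scong_trans (scong_sym HM) H.
  exact: scong_trans HM H.
rewrite HC.
rewrite -(@card_classes_transfer _ _ [pred f : rule n | supp f == M] (@Rel n) _ _ id).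
- rewrite (@card_classes_transfer _ _ [pred f : rule n | supp f == M] (@Rel n)
     [pred h : rule #|M| | irreducible h] (ER `[< Sym M >]) (restr M)).
  + case: (boolP `[< Sym M >]) => HS /=.
      by rewrite classes_Lbar addn0.
    exact: classes_c.
  + exact: Rel_equiv.
  + exact: ER_equiv.
  + by move=> f; rewrite inE => /eqP Hf; rewrite inE; apply: irr_restr.
  + by move=> f g; rewrite !inE => /eqP Hf /eqP Hg; rewrite (Rel_EM Hf Hg).
  + move=> h; rewrite inE => Hh; exists (lift h); first by rewrite inE irr_lift.
    by rewrite restr_lift; apply: equiv_refl; apply: ER_equiv.
- exact: Rel_equiv.
- exact: Rel_equiv.
- by move=> f; rewrite !inE => /eqP ->; rewrite eqxx.
- by [].
- move=> g; rewrite !inE => /eqP Hg.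
  have : M \in [set M' | `[< scong (supp g) M' >]].
    by rewrite Hg inE; apply/asboolP; apply: scong_refl.
  rewrite inE => /asboolP /scong_sym /shift_exists [f Hf HR].
  by exists f; rewrite ?inE ?Hf.
Qed.

Local Close Scope ring_scope.

Theorem proposition9 (n : nat) :
  num_G2_classes n =
    (\sum_(C in Pclasses n) num_Lbar_classes #|rep C|
     + \sum_(C in Pclasses n | ~~ `[< Sym (rep C) >])
         (tbar U1 #|rep C| + tbar Uc #|rep C|))%N.
Proof.
have E0 : num_G2_classes n = #|classes (predT : {pred rule n}) (@Rel n)|.
  rewrite /num_G2_classes /classes; apply: eq_card => K.
  by apply/imsetP/imsetP => [[f _ ->] | [f _ ->]]; exists f => //;
    apply/setP => g; rewrite !inE.
rewrite E0 (card_classes_partition (pi := fun f : rule n => [set M' | `[< scong (supp f) M' >]])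
                                   (Ps := Pclasses n)).
- rewrite big_mkcondr -big_split /=; apply: eq_bigr => C HC.
  exact: per_class.
- exact: Rel_equiv.
- by move=> f _; apply/imsetP; exists (supp f).
- move=> f g _ _ /Rel_scong H; apply/setP => M'; rewrite !inE.
  apply/asboolP/asboolP => H'.
    exact: scong_trans (scong_sym H) H'.
  exact: scong_trans H H'.
Qed.
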